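(* Let $\mathbb{F}$ be a field of characteristic not $2$, let $V=\mathrm{span}\{u,v\}$ with a symmetric bilinear form $B$ satisfying $B(u,u)=B(v,v)=1$, $B(u,v)=\delta$, and let $\mathfrak{S}(\delta)=\mathbb{F}\oplus V$ with product $(\alpha+x)(\beta+y)=(\alpha\beta+B(x,y))+(\alpha y+\beta x)$ and Frobenius form $(\alpha+x,\beta+y)=2\alpha\beta+2B(x,y)$. Suppose $\delta\neq\pm1$ and that $\mathbb{F}$ contains the roots $\zeta,\zeta^{-1}$ of $x^2-2\delta x+1$. Then: (a) $\mathfrak{S}(\delta)$ contains exactly two $1$-dimensional nilpotent subalgebras $\mathbb{F}s$ and $\mathbb{F}t$ (i.e. $s^2=0=t^2$), and both lie in $V$; (b) $s,1,t$ form a basis of $\mathfrak{S}(\delta)$; moreover, if $s$ and $t$ are scaled so that $(s,t)=\frac14$ (equivalently $B(s,t)=\frac18$), then the idempotents of $\mathfrak{S}(\delta)$ are exactly $0$, $1$, and the elements $\xi s+\frac12+\xi^{-1}t$ for $\xi\in\mathbb{F}\setminus\{0\}$.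
   Context: Here $1$ denotes the element $1+0$ of $\mathbb{F}\oplus V$, which is the identity of $\mathfrak{S}(\delta)$. *)

(* Defs.v *)
From HB Require Import structures.
From mathcomp Require Import all_boot all_order all_algebra.
Set Implicit Arguments. Unset Strict Implicit. Unset Printing Implicit Defensive.
Import Order.TTheory GRing.Theory Num.Theory.
Local Open Scope ring_scope.

(* The algebra S(delta) = F (+) V, V = span{u,v}, is modelled by 'rV[F]_3:
   the row x represents  (x 0) + (x 1) u + (x 2) v  with coordinates
   c0 (scalar part), cu (u-coordinate), cv (v-coordinate). *)
Section SDelta.
Variable F : fieldType.

Definition c0 (x : 'rV[F]_3) : F := x ord0 (@inord 2 0).
Definition cu (x : 'rV[F]_3) : F := x ord0 (@inord 2 1).
Definition cv (x : 'rV[F]_3) : F := x ord0 (@inord 2 2).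

Definition mkS (al a b : F) : 'rV[F]_3 :=
  \row_(i < 3) [:: al; a; b]`_i.

(* symmetric bilinear form on V: B(u,u)=B(v,v)=1, B(u,v)=delta *)
Definition Bform (delta : F) (a b c d : F) : F :=
  a * c + b * d + delta * (a * d + b * c).

Definition BV (delta : F) (x y : 'rV[F]_3) : F :=
  Bform delta (cu x) (cv x) (cu y) (cv y).

Definition Smul (delta : F) (x y : 'rV[F]_3) : 'rV[F]_3 :=
  mkS (c0 x * c0 y + BV delta x y)
      (c0 x * cu y + c0 y * cu x)
      (c0 x * cv y + c0 y * cv x).

Definition Sform (delta : F) (x y : 'rV[F]_3) : F :=
  2%:R * c0 x * c0 y + 2%:R * BV delta x y.

Definition Sone : 'rV[F]_3 := mkS 1 0 0.

Definition inV (x : 'rV[F]_3) : Prop := c0 x = 0.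

End SDelta.

(* Main.v *)
Require Import Defs.
From HB Require Import structures.
From mathcomp Require Import all_boot all_order all_algebra ring.
Import Order.TTheory GRing.Theory Num.Theory.
Local Open Scope ring_scope.

Section H.
Variable F : fieldType.

Lemma c0_mkS (a b c : F) : c0 (mkS a b c) = a.
Proof. by rewrite /c0 /mkS mxE inordK. Qed.
Lemma cu_mkS (a b c : F) : cu (mkS a b c) = b.
Proof. by rewrite /cu /mkS mxE inordK. Qed.
Lemma cv_mkS (a b c : F) : cv (mkS a b c) = c.
Proof. by rewrite /cv /mkS mxE inordK. Qed.

Lemma mkS_eta (x : 'rV[F]_3) : x = mkS (c0 x) (cu x) (cv x).
Proof.
apply/rowP => -[[|[|[|//]]] Hi]; rewrite !mxE /c0 /cu /cv /=;
  congr (x _ _); apply/val_inj; by rewrite /= inordK.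
Qed.

Lemma mkS_inj (a b c a' b' c' : F) : mkS a b c = mkS a' b' c' -> [/\ a = a', b = b' & c = c'].
Proof.
move=> e; split; [move: (congr1 (@c0 F) e)|move: (congr1 (@cu F) e)|move: (congr1 (@cv F) e)];
  by rewrite ?c0_mkS ?cu_mkS ?cv_mkS.
Qed.

Lemma addmkS (a b c a' b' c' : F) : mkS a b c + mkS a' b' c' = mkS (a+a') (b+b') (c+c').
Proof. by apply/rowP => -[[|[|[|//]]] Hi]; rewrite !mxE. Qed.
Lemma scalemkS (k a b c : F) : k *: mkS a b c = mkS (k*a) (k*b) (k*c).
Proof. by apply/rowP => -[[|[|[|//]]] Hi]; rewrite !mxE. Qed.
Lemma mkS0 : 0 = mkS 0 0 (0:F).
Proof. by apply/rowP => -[[|[|[|//]]] Hi]; rewrite !mxE. Qed.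
Lemma Smul_mkS d (a b c a' b' c' : F) : Smul d (mkS a b c) (mkS a' b' c') =
  mkS (a*a' + Bform d b c b' c') (a*b' + a'*b) (a*c' + a'*c).
Proof. by rewrite /Smul /BV !c0_mkS !cu_mkS !cv_mkS. Qed.
Lemma Sform_mkS d (a b c a' b' c' : F) : Sform d (mkS a b c) (mkS a' b' c') =
  2%:R * a * a' + 2%:R * Bform d b c b' c'.
Proof. by rewrite /Sform /BV !c0_mkS !cu_mkS !cv_mkS. Qed.

Lemma dimfull : \dim (fullv : {vspace 'rV[F]_3}) = 3%N.
Proof. by rewrite dimvf /dim /=. Qed.

Lemma solve_eq (x r L R m : F) : L = R -> x - r = (L - R) * m -> x = r.
Proof. by move=> ->; rewrite subrr mul0r => /eqP; rewrite subr_eq0 => /eqP. Qed.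
End H.
Arguments mkS_eta {F} x.

Ltac nz := repeat (apply/andP; split); try done.

Theorem lemma3p5 (F : fieldType) (delta : F)
  (hchar : (2%:R : F) != 0)
  (hd1 : delta != 1) (hdm1 : delta != -1)
  (hroots : exists zeta : F, zeta ^+ 2 - 2%:R * delta * zeta + 1 = 0) :
  exists s0 t0 : 'rV[F]_3,
  [/\ (* (a): exactly two 1-dim nilpotent subalgebras F s0, F t0, inside V *)
      s0 != 0 /\ t0 != 0,
      Smul delta s0 s0 = 0 /\ Smul delta t0 t0 = 0,
      inV s0 /\ inV t0,
      ~ (exists c : F, t0 = c *: s0) /\
      (forall x : 'rV[F]_3, x != 0 -> Smul delta x x = 0 ->
         (exists c : F, x = c *: s0) \/ (exists c : F, x = c *: t0)) &
      (* (b): for any generators s of F s0 and t of F t0 *)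
      forall s t : 'rV[F]_3, s != 0 -> t != 0 ->
        (exists c : F, s = c *: s0) -> (exists c : F, t = c *: t0) ->
        basis_of fullv [:: s; Sone F; t] /\
        (Sform delta s t = 4%:R^-1 ->
         forall x : 'rV[F]_3, Smul delta x x = x <->
           [\/ x = 0, x = Sone F |
               exists xi : F, xi != 0 /\
                 x = xi *: s + 2%:R^-1 *: Sone F + xi^-1 *: t])].
Proof.
case: hroots => z hz.
have z0 : z != 0.
  apply/eqP => e; move: hz; rewrite e expr0n /= mulr0 subrr add0r => /eqP.
  by rewrite oner_eq0.
have hdel : delta = (z^+2+1)/(2%:R*z).
  by apply: (@solve_eq _ _ _ _ _ (-(2%:R*z)^-1) hz); field; nz.
subst delta.
have hz2 : z^+2 - 1 != 0.
  apply/eqP => e; have : (z-1)*(z+1) = 0 by rewrite -e; ring.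
  move/eqP; rewrite mulf_eq0 => /orP[] /eqP e'.
    have ez : z = 1 by apply/eqP; rewrite -subr_eq0 e'.
    by apply: (negP hd1); rewrite ez; apply/eqP; field.
  have ez : z = -1 by apply/eqP; rewrite -addr_eq0 e'.
  apply: (negP hdm1); rewrite ez; apply/eqP.
  by rewrite sqrrN expr1n mulrN1 invrN mulrN divff.
have hz2' : z * z - 1 != 0 by rewrite -expr2.
have h4 : (4%:R : F) != 0.
  by rewrite (_ : 4%:R = 2%:R * 2%:R :> F) ?mulf_neq0 // -natrM.
exists (mkS 0 (-z) 1), (mkS 0 (-z^-1) 1).
split.
- by split; apply/eqP; rewrite mkS0 => /mkS_inj [_ _ /eqP]; rewrite oner_eq0.
- by split; rewrite Smul_mkS mkS0 /Bform; congr mkS; field; nz.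
- by split; rewrite /inV c0_mkS.
- split.
    case=> c; rewrite scalemkS => /mkS_inj [_ e1 e2].
    have c1 : c = 1 by rewrite -[c]mulr1 -e2.
    rewrite c1 mul1r in e1.
    have e3 : z^-1 = z by apply: oppr_inj.
    apply: (negP hz2); apply/eqP.
    rewrite (_ : z^+2 - 1 = z * (z - z^-1)); last by field.
    by rewrite e3 subrr mulr0.
  move=> x; rewrite (mkS_eta x); move: (c0 x) (cu x) (cv x) => al a b hx Hn.
  rewrite Smul_mkS mkS0 in Hn; case/mkS_inj: Hn => h0 h1 h2.
  have al0 : al = 0.
    case: (eqVneq al 0) => // nal; exfalso.
    have a0 : a = 0.
      have : (2%:R*al) * a = 0 by rewrite -h1; ring.
      by move/eqP; rewrite !mulf_eq0 (negPf hchar) (negPf nal) /= => /eqP.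
    have b0 : b = 0.
      have : (2%:R*al) * b = 0 by rewrite -h2; ring.
      by move/eqP; rewrite !mulf_eq0 (negPf hchar) (negPf nal) /= => /eqP.
    rewrite a0 b0 /Bform in h0.
    have : al * al = 0 by rewrite -h0; ring.
    by move/eqP; rewrite mulf_eq0 (negPf nal).
  have : (a + z*b)*(a + z^-1*b) = 0 by rewrite -h0 al0 /Bform; field; nz.
  move/eqP; rewrite mulf_eq0 => /orP[] /eqP e.
    left; exists b; rewrite scalemkS al0.
    have -> : a = - (z*b) by apply/eqP; rewrite -addr_eq0 e.
    congr mkS; ring.
  right; exists b; rewrite scalemkS al0.
  have -> : a = - (z^-1*b) by apply/eqP; rewrite -addr_eq0 e.
  congr mkS; ring.
move=> s t sn tn [c ec] [c' ec']; subst s t.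
have cn : c != 0 by apply: contraNneq sn => ->; rewrite scale0r.
have c'n : c' != 0 by apply: contraNneq tn => ->; rewrite scale0r.
rewrite !scalemkS; split.
  rewrite basisEdim /= dimfull leqnn andbT.
  apply/subvP => w _; rewrite (mkS_eta w); move: (c0 w) (cu w) (cv w) => w0 w1 w2.
  pose p := (-w1 - z^-1*w2)/(z - z^-1).
  have -> : mkS w0 w1 w2 = (p/c) *: mkS (c*0) (c * - z) (c*1) + w0 *: Sone F
        + ((w2 - p)/c') *: mkS (c'*0) (c' * - z^-1) (c'*1).
    by rewrite /Sone !scalemkS !addmkS /p; congr mkS; field; nz.
  by rewrite !memvD // memvZ // memv_span // !inE eqxx ?orbT.
move=> hst.
rewrite Sform_mkS /Bform in hst.
have ec' : c' = - (z^+2 / (4%:R * c * (z^+2 - 1)^+2)).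
  apply: (@solve_eq _ _ _ _ _ (- (z^+2 / (c * (z^+2 - 1)^+2))) hst).
  field; nz.
subst c'.
move=> x; split; last first.
  case=> [->|->|[xi [xin ->]]]; rewrite ?mkS0 /Sone ?scalemkS ?addmkS Smul_mkS /Bform;
    congr mkS; field; nz.
rewrite (mkS_eta x); move: (c0 x) (cu x) (cv x) => al a b.
rewrite Smul_mkS; case/mkS_inj => h0 h1 h2.
case: (eqVneq (2%:R * al - 1) 0) => hal; last first.
  have a0 : a = 0.
    have : (2%:R*al - 1) * a = (al * a + al * a) - a by ring.
    rewrite h1 subrr.
    by move/eqP; rewrite mulf_eq0 (negPf hal) /= => /eqP.
  have b0 : b = 0.
    have : (2%:R*al - 1) * b = (al * b + al * b) - b by ring.
    rewrite h2 subrr.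
    by move/eqP; rewrite mulf_eq0 (negPf hal) /= => /eqP.
  subst a b; rewrite /Bform in h0.
  have : al * (al - 1) = (al * al + (0 * 0 + 0 * 0 + ((z ^+ 2 + 1) / (2%:R * z)) * (0 * 0 + 0 * 0))) - al by ring.
  rewrite h0 subrr.
  move/eqP; rewrite mulf_eq0 => /orP[] /eqP e.
    by constructor 1; rewrite e mkS0.
  have -> : al = 1 by apply/eqP; rewrite -subr_eq0 e.
  by constructor 2.
have eal : al = 2%:R^-1.
  apply: (@solve_eq _ _ _ _ _ (2%:R^-1) hal); field; nz.
subst al.
have [p [q [ea eb]]] : exists p q, a = - z * p - z^-1 * q /\ b = p + q.
  exists ((-a - z^-1*b)/(z - z^-1)), (b - (-a - z^-1*b)/(z - z^-1)).
  split; field; nz.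
subst a b.
rewrite /Bform in h0.
case: (eqVneq p 0) => hp.
  subst p; exfalso; apply: (negP (oner_neq0 F)); apply/eqP.
  apply: (@solve_eq _ _ _ _ _ (-4%:R) h0); field; nz.
have eq : q = - (z^+2 / (4%:R * p * (z^+2 - 1)^+2)).
  apply: (@solve_eq _ _ _ _ _ (- (z^+2 / (p * (z^+2 - 1)^+2))) h0).
  field; nz.
subst q.
constructor 3; exists (p / c); split; first by rewrite mulf_neq0 ?invr_neq0.
rewrite !scalemkS !addmkS; congr mkS; field; nz.
Qed.
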